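(* Let $m\ge 1$, $k\ge 2$ and $n\ge k-1$. Let $P(\mathbf x)=\prod_{i=1}^n\big((x_i-1)^{\underline m}\big)^k$. Let $P_0$ be the unique polynomial in $V_{m,k}$ such that $P-P_0$ has a zero of multiplicity at least $k$ at every point of $mB^n\setminus\{\mathbf 0\}$ and a zero of multiplicity at least $k-1$ at $\mathbf 0$. Then the homogeneous component of $P_0$ of degree $mn+(m+1)(k-1)-1$ is divisible by $(x_1\cdots x_n)^m$.
   Context: $mB^n=\{0,1,\ldots,m\}^n$. Falling factorials are $(y)^{\underline 0}=1$ and $(y)^{\underline j}=y(y-1)\cdots(y-j+1)$ for $j\ge1$, so $(x_i-1)^{\underline m}=(x_i-1)(x_i-2)\cdots(x_i-m)$. A polynomial has a zero of multiplicity at least $k$ at $\mathbf a$ if all its partial derivatives of order less than $k$ vanish at $\mathbf a$. For an integer $k\ge 2$, a polynomial $Q\in\mathbb{R}[x_1,\ldots,x_n]$ is called $(m,k)$-reduced if two conditions hold: $\deg Q\le mn+(m+1)(k-1)-1$, and no monomial of $Q$ is divisible by $x_{i_1}^{m+1}\cdots x_{i_k}^{m+1}$ for any indices $i_1,\ldots,i_k$ (not necessarily distinct). $V_{m,k}$ is the space of $(m,k)$-reduced polynomials. The existence and uniqueness of $P_0$ are known. *)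

(* Defs.v *)
From Stdlib Require Import Rdefinitions.
From HB Require Import structures.
From mathcomp Require Import all_boot all_order all_algebra.
From mathcomp Require Import mpoly.
From mathcomp Require Import Rstruct.

Set Implicit Arguments.
Unset Strict Implicit.
Unset Printing Implicit Defensive.

Import Order.TTheory GRing.Theory Num.Theory.
Local Open Scope ring_scope.

Definition ffall (n m : nat) (i : 'I_n) : {mpoly R[n]} :=
  \prod_(j < m) ('X_i - (j.+1)%:R%:MP).

Definition Ppoly (n m k : nat) : {mpoly R[n]} :=
  \prod_(i < n) (ffall m i) ^+ k.

Definition mult_ge (n : nat) (Q : {mpoly R[n]}) (r : nat) (a : 'I_n -> R) : Prop :=
  forall al : 'X_{1..n}, (mdeg al < r)%N -> (Q^`M[al]).@[a] = 0.

(* The monomial x^s is divisible by x_{i_1}^{m+1} ... x_{i_k}^{m+1} for some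
   indices i_1..i_k (not necessarily distinct) given by f : 'I_k -> 'I_n. *)
Definition mon_div_by (n m k : nat) (s : 'X_{1..n}) : Prop :=
  exists f : 'I_k -> 'I_n,
    forall i : 'I_n, ((m.+1) * #|[set j | f j == i]| <= s i)%N.

(* (m,k)-reduced polynomials: the space V_{m,k}. *)
Definition reduced (n m k : nat) (Q : {mpoly R[n]}) : Prop :=
  (msize Q <= (m * n + m.+1 * (k - 1) - 1).+1)%N /\
  forall s : 'X_{1..n}, s \in msupp Q -> ~ mon_div_by m k s.

Definition grid_pt (n m : nat) (a : 'I_n -> 'I_m.+1) : 'I_n -> R :=
  fun i => ((a i : nat)%:R : R).

Definition homog_comp (n : nat) (d : nat) (Q : {mpoly R[n]}) : {mpoly R[n]} :=
  pihomog mdeg d Q.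

(* Main.v *)
Require Import Defs.
From Stdlib Require Import Rdefinitions.
From HB Require Import structures.
From mathcomp Require Import all_boot all_order all_algebra.
From mathcomp Require Import mpoly.
From mathcomp Require Import Rstruct.
From mathcomp Require Import ring.
From mathcomp Require Import zify.
Import GRing.Theory Num.Theory.
Local Open Scope ring_scope.

Lemma derivn_XsubC_mul (a : R) (q : {poly R}) b :
  (('X - a%:P) * q)^`(b.+1) = q^`(b) *+ b.+1 + ('X - a%:P) * q^`(b.+1).
Proof.
elim: b => [|b IH].
  by rewrite derivn1 derivM derivXsubC mul1r derivn0 derivn1.
rewrite derivnS IH derivD derivMn derivM derivXsubC mul1r -!derivnS.
by rewrite addrA -mulrSr.
Qed.

Lemma root_mult (a : R) tau (p : {poly R}) :
  (forall b, (b < tau)%N -> (p^`(b)).[a] = 0) -> ('X - a%:P)^+tau %| p.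
Proof.
elim: tau p => [|tau IH] p H; first by rewrite expr0 dvd1p.
have /factor_theorem [q Hq] : root p a by apply/rootP; rewrite -[p]derivn0; apply: H.
rewrite Hq exprSr dvdp_mul2r ?polyXsubC_eq0 //.
apply: IH => b Hb.
have := H b.+1 Hb; rewrite Hq mulrC derivn_XsubC_mul hornerD hornerMn hornerM.
rewrite hornerXsubC subrr mul0r addr0 => /eqP.
by rewrite mulrn_eq0 /= => /eqP.
Qed.

Lemma prod_pow_dvd (s : seq R) tau (p : {poly R}) : uniq s ->
  (forall a, a \in s -> forall b, (b < tau)%N -> (p^`(b)).[a] = 0) ->
  \prod_(a <- s) ('X - a%:P)^+tau %| p.
Proof.
elim: s => [|a s IH] /=; first by rewrite big_nil dvd1p.
move=> /andP[nas us] H; rewrite big_cons Gauss_dvdp.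
  rewrite root_mult ?IH //; first by move=> x xs; apply: H; rewrite inE xs orbT.
  by move=> b Hb; apply: H => //; rewrite inE eqxx.
apply: coprimep_expl; rewrite coprimep_sym coprimep_XsubC.
rewrite /root horner_prod prodf_seq_neq0; apply/allP => x xs /=.
rewrite horner_exp hornerXsubC expf_neq0 // subr_eq0.
by apply/eqP => ax; move: nas; rewrite ax xs.
Qed.

Lemma size_prod_pow (s : seq R) tau :
  size (\prod_(a <- s) ('X - a%:P)^+tau) = (size s * tau).+1.
Proof.
elim: s => [|a s IH]; first by rewrite big_nil size_poly1.
rewrite big_cons mulrC size_Mmonic ?monic_exp ?monicXsubC //.
  by rewrite IH size_exp_XsubC /= mulSn addnC addSn.
by rewrite -size_poly_eq0 IH.
Qed.

Lemma hermite_zero (s : seq R) tau (p : {poly R}) : uniq s ->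
  (forall a, a \in s -> forall b, (b < tau)%N -> (p^`(b)).[a] = 0) ->
  (size p <= size s * tau)%N -> p = 0.
Proof.
move=> us H sp; apply/eqP; apply: contraT => p0.
have := dvdp_leq p0 (@prod_pow_dvd s tau p us H).
rewrite size_prod_pow => H2; have := leq_trans H2 sp; by rewrite ltnn.
Qed.

Lemma horner_derivn_sum (N : nat) (v : nat -> R) b (x : R) :
  ((\poly_(i < N) v i)^`(b)).[x] =
  \sum_(i < N) v i * (('X^i)^`(b)).[x].
Proof.
rewrite poly_def linear_sum horner_sum; apply: eq_bigr => i _.
by rewrite linearZ /= hornerZ.
Qed.

Lemma hermite_exists (T : finType) (node : T -> R) (ord : T -> nat) :
  (forall p : {poly R}, (size p <= #|T|)%N ->
     (forall t, (p^`(ord t)).[node t] = 0) -> p = 0) ->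
  exists c : T -> R, forall e, (e < #|T|)%N ->
    \sum_t c t * (('X^e)^`(ord t)).[node t] = (e == #|T|.-1)%:R.
Proof.
move=> Hinj.
set N := #|T|.
pose A : 'M[R]_N := \matrix_(i, j) (('X^i)^`(ord (enum_val j))).[node (enum_val j)].
have free: row_free A.
  rewrite -kermx_eq0; apply/rowV0P => v /sub_kermxP vA.
  pose p := \poly_(i < N) oapp (v 0) 0 (insub i).
  have p0 : p = 0.
    apply: Hinj; first exact: size_poly.
    move=> t; rewrite horner_derivn_sum.
    have := congr1 (fun M : 'M[R]_(1, N) => M 0 (enum_rank t)) vA.
    rewrite !mxE /= => H; apply: (etrans _ H); apply: eq_bigr => i _.
    by rewrite mxE enum_rankK valK.
  apply/matrixP => i j; rewrite ord1 mxE.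
  have := congr1 (fun q : {poly R} => q`_j) p0.
  by rewrite coef_poly ltn_ord coef0 valK.
have unitA : A \in unitmx by rewrite -row_free_unit.
have [N0|Npos] := posnP N.
  exists (fun _ => 0) => e eN; exfalso.
  have : (e < N)%N := eN; by rewrite N0.
have lt : (N.-1 < N)%N by rewrite prednK.
pose idx := Ordinal lt.
pose w := invmx A *m delta_mx idx (0 : 'I_1).
exists (fun t => w (enum_rank t) 0) => e eN.
have eN' : (e < N)%N := eN.
have := congr1 (fun M : 'M[R]_(N, 1) => M (Ordinal eN') 0) (mulKVmx unitA (delta_mx idx (0 : 'I_1))).
rewrite !mxE /= eqxx andbT => H.
have -> : (e == N.-1) = (Ordinal eN' == idx) by [].
rewrite -{}H.
have -> : forall F : T -> R, \sum_t F t = \sum_(i < N) F (enum_val i).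
  by move=> F; rewrite -big_enum_val /= big_mkcond /=; apply: eq_bigr.
apply: eq_bigr => i _.
rewrite mulrC; congr (_ * _); first by rewrite /A mxE.
by rewrite enum_valK.
Qed.

Section MV.
Variable n : nat.
Implicit Types (Q : {mpoly R[n]}).

Lemma mderiv_exp (p : {mpoly R[n]}) i k :
  (p ^+ k.+1)^`M(i) = p ^+ k * (p^`M(i) *+ k.+1).
Proof.
elim: k => [|k IH]; first by rewrite expr1 expr0 mul1r.
rewrite exprS mderivM IH exprS; ring.
Qed.

Lemma mderiv_powfac (p : {mpoly R[n]}) i k Q :
  exists Q', (p ^+ k.+1 * Q)^`M(i) = p ^+ k * Q'.
Proof.
exists (p^`M(i) *+ k.+1 * Q + p * Q^`M(i)).
rewrite mderivM mderiv_exp exprS; ring.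
Qed.

Lemma mderivm_powfac (p : {mpoly R[n]}) r : forall (be : 'X_{1..n}) k Q,
  mdeg be = r -> (r <= k)%N ->
  exists Q', (p ^+ k * Q)^`M[be] = p ^+ (k - r) * Q'.
Proof.
elim: r => [|r IH] be k Q dbe rk.
  move/eqP: dbe; rewrite mdeg_eq0 => /eqP ->.
  by exists Q; rewrite mderivm0m subn0.
have [i bi] : exists i, (0 < be i)%N.
  apply/existsP; apply: contraT; rewrite negb_exists => /forallP H.
  have : mdeg be = 0%N.
    by rewrite mdegE big1 // => i _; move: (H i); rewrite lt0n negbK => /eqP.
  by rewrite dbe.
have Ebe : be = (U_(i) + (be - U_(i)))%MM.
  apply/mnmP => l; rewrite mnmDE mnmBE mnm1E.
  by case: eqP => [<-|_]; rewrite ?add0n ?subn0 // add1n subn1 prednK.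
have dbe' : mdeg (be - U_(i))%MM = r.
  by move: dbe; rewrite {1}Ebe mdegD mdeg1 add1n => -[].
case: k rk => // k rk.
rewrite Ebe mderivmDm mderivmU1m.
have [Q1 ->] := mderiv_powfac p i k Q.
have [Q2 ->] := IH _ k Q1 dbe' rk.
by exists Q2; rewrite subSS.
Qed.

Lemma meval_powfac (j : 'I_n) (c : R) k Q (be : 'X_{1..n}) (a : 'I_n -> R) :
  a j = c -> (mdeg be < k)%N ->
  ((('X_j - c%:MP) ^+ k * Q)^`M[be]).@[a] = 0.
Proof.
move=> ajc bk.
have [Q' ->] := @mderivm_powfac ('X_j - c%:MP) (mdeg be) be k Q (erefl _) (ltnW bk).
rewrite mevalM rmorphXn /= mevalB mevalXU mevalC ajc subrr expr0n.
by rewrite subn_eq0 leqNgt bk mul0r.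
Qed.


Lemma Ppoly_fac m k (j : 'I_n) (l : 'I_m.+1) : l != ord0 ->
  exists Q, Ppoly n m k = ('X_j - ((l : nat)%:R)%:MP) ^+ k * Q.
Proof.
move=> l0.
have lm : (l.-1 < m)%N by rewrite -ltnS prednK ?lt0n // ltn_ord.
rewrite /Ppoly (bigD1 j) //= /ffall (bigD1 (Ordinal lm)) //= prednK ?lt0n //.
by rewrite exprMn -mulrA; eexists.
Qed.

Section L.
Variables m k : nat.
Definition Tn := ('I_m.+1 * 'I_k)%type.

Definition ell (c : Tn -> R) (e : nat) :=
  \sum_(x : Tn) c x * (('X^e)^`(x.2)).[((x.1 : nat)%:R : R)].

Definition Lf (c : 'I_n -> Tn -> R) (f : {mpoly R[n]}) :=
  \sum_(A : {ffun 'I_n -> Tn}) (\prod_i c i (A i)) *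
     (f^`M[[multinom ((A i).2 : nat) | i < n]]).@[fun i => (((A i).1 : nat)%:R : R)].

Lemma Lf_X c (u : 'X_{1..n}) : Lf c 'X_[u] = \prod_i ell (c i) (u i).
Proof.
rewrite /ell bigA_distr_bigA /Lf; apply: eq_bigr => A _.
rewrite mderivmX mevalZ mevalX natr_prod -!big_split /=.
apply: eq_bigr => i _.
rewrite derivnXn hornerMn hornerXn !mnmE.
by rewrite mulr_natl.
Qed.

Lemma Lf_lin c f : Lf c f = \sum_(u <- msupp f) f@_u * Lf c 'X_[u].
Proof.
rewrite /Lf {1}(mpolyE f).
under eq_bigr => A _ do rewrite raddf_sum raddf_sum mulr_sumr.
rewrite exchange_big /=; apply: eq_bigr => u _.
rewrite mulr_sumr; apply: eq_bigr => A _.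
by rewrite mderivmZ mevalZ mulrCA.
Qed.

End L.

End MV.

Lemma ell_exists m k (S : pred 'I_m.+1) tau : (tau <= k)%N ->
  exists c : Tn m k -> R,
    (forall x, c x != 0 -> (x.1 \in S) && (x.2 < tau)%N) /\
    forall e, (e < #|S| * tau)%N -> ell m k c e = (e == (#|S| * tau).-1)%:R.
Proof.
move=> Htk.
pose T := ({x : 'I_m.+1 | x \in S} * 'I_tau)%type.
have cardT : #|{: T}| = (#|S| * tau)%N.
  by rewrite card_prod card_sig card_ord.
pose node (t : T) : R := ((val t.1 : nat)%:R).
pose ord (t : T) : nat := t.2.
have Hinj : forall p : {poly R}, (size p <= #|{: T}|)%N ->
    (forall t, (p^`(ord t)).[node t] = 0) -> p = 0.
  move=> p sp Hp.
  apply: (@hermite_zero [seq (((x : 'I_m.+1) : nat)%:R : R) | x <- enum S] tau p).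
  - rewrite map_inj_uniq ?enum_uniq // => x y /eqP.
    by rewrite eqr_nat => /eqP /val_inj.
  - move=> a /mapP [x xS ->] b bt.
    have xS' : x \in S by rewrite -mem_enum.
    exact: (Hp (exist _ x xS', Ordinal bt)).
  - by rewrite size_map -cardE -cardT.
have [c' Hc'] := @hermite_exists _ node ord Hinj.
pose xt (t : T) : Tn m k := (val t.1, widen_ord Htk t.2).
exists (fun x => \sum_(t | xt t == x) c' t); split.
  move=> x Hx0; apply: contraTT Hx0 => Hx; rewrite negbK big_pred0 // => t.
  apply/negP => /eqP Et; move: Hx; rewrite -Et /=.
  by rewrite (valP t.1) ltn_ord.
move=> e eN; rewrite /ell.
under eq_bigr => x _ do rewrite mulr_suml.
rewrite (exchange_big_dep xpredT) //=.
rewrite -cardT -Hc' //; last by rewrite cardT.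
apply: eq_bigr => t _.
by rewrite (big_pred1 (xt t)) // => x; rewrite /= eq_sym.
Qed.

Local Close Scope ring_scope.

Lemma card_set_sum (T : finType) (P : pred T) :
  #|[set x | P x]| = \sum_x (P x : nat).
Proof.
rewrite -sum1_card big_mkcond /=; apply: eq_bigr => x _.
by rewrite inE; case: (P x).
Qed.

Lemma counts_exist n : forall k (t : 'I_n -> nat), (k <= \sum_i t i)%N ->
  exists f : 'I_k -> 'I_n, forall i, (#|[set x | f x == i]| <= t i)%N.
Proof.
elim => [|k IH] t Hk.
  have f : 'I_0 -> 'I_n by case=> x; rewrite ltn0.
  exists f => i; rewrite card_set_sum big_ord0 //.
have [i0 ti0] : exists i0, (0 < t i0)%N.
  apply/existsP; apply: contraLR Hk; rewrite negb_exists => /forallP H.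
  by rewrite -ltnNge big1 // => i _; move: (H i); rewrite lt0n negbK => /eqP.
pose t' i := (t i - (i == i0))%N.
have Hk' : (k <= \sum_i t' i)%N.
  have E1 : \sum_i t i = (t i0 + \sum_(i | i != i0) t i)%N by rewrite (bigD1 i0).
  have E2 : \sum_i t' i = (t' i0 + \sum_(i | i != i0) t i)%N.
    rewrite (bigD1 i0) //=; congr (_ + _)%N.
    by apply: eq_bigr => i /negbTE; rewrite /t' => ->; rewrite subn0.
  rewrite E2 /t' eqxx; move: Hk; rewrite E1; lia.
have [f' Hf'] := IH t' Hk'.
pose f (x : 'I_k.+1) : 'I_n := if insub (x : nat) is Some y then f' y else i0.
exists f => i.
rewrite card_set_sum big_ord_recr /=.
have -> : f ord_max = i0 by rewrite /f insubF //= ltnn.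
rewrite (eq_bigr (fun x => (f' x == i) : nat)); last first.
  move=> x _; rewrite /f.
  have -> : insub (widen_ord (leqnSn k) x : nat) = Some x by exact: valK.
  by [].
rewrite -card_set_sum.
have := Hf' i; rewrite /t'; case: (eqVneq i i0) => [->|ne]; rewrite ?eqxx.
  move: ti0; lia.
by rewrite subn0 addn0.
Qed.

Lemma mon_div_by_suff n m k (s : 'X_{1..n}) :
  (k <= \sum_i s i %/ m.+1)%N -> mon_div_by m k s.
Proof.
move=> H; have [f Hf] := @counts_exist n k (fun i => s i %/ m.+1) H.
exists f => i; apply: leq_trans (leq_trunc_div (s i) m.+1).
by rewrite mulnC leq_mul2r Hf orbT.
Qed.

Local Open Scope ring_scope.

Lemma final_div n m d (P0 : {mpoly R[n]}) :
  (forall s, s \in msupp P0 -> mdeg s = d -> forall i, (m <= s i)%N) ->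
  exists Q : {mpoly R[n]}, homog_comp d P0 = Q * (\prod_(i < n) 'X_i) ^+ m.
Proof.
move=> H.
pose mm := [multinom m | i < n].
exists (\sum_(u <- msupp P0 | mdeg u == d) P0@_u *: 'X_[u - mm]).
have E : (\prod_(i < n) 'X_i) ^+ m = 'X_[mm] :> {mpoly R[n]}.
  rewrite mpolyXE_id -prodrXl.
  by apply: eq_bigr => i _; rewrite /mm mnmE.
rewrite E.
rewrite /homog_comp pihomogE.
rewrite mulr_suml -big_filter -[RHS]big_filter.
apply: eq_big_seq => u; rewrite mem_filter.
move=> /andP [/eqP du uin].
rewrite -scalerAl -mpolyXD submK //.
by apply/mnm_lepP => i; rewrite mnmE; apply: H.
Qed.

Lemma key m k n (P0 : {mpoly R[n]}) (s : 'X_{1..n}) (j : 'I_n) :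
  (1 <= m)%N -> (2 <= k)%N -> reduced m k P0 ->
  (forall a : 'I_n -> 'I_m.+1, (exists i, a i != ord0) ->
      mult_ge (Ppoly n m k - P0) k (grid_pt a)) ->
  s \in msupp P0 -> mdeg s = (m * n + m.+1 * (k - 1) - 1)%N -> (s j < m)%N ->
  False.
Proof.
move=> m1 k2 [Hsz Hred] H sin ds sj.
have ndiv := Hred s sin.
pose t i := (s i %/ m.+1)%N.
pose r i := (s i %% m.+1)%N.
have Tk : (\sum_i t i <= k - 1)%N.
  rewrite leqNgt; apply/negP => Hlt; apply: ndiv; apply: mon_div_by_suff.
  move: Hlt k2; rewrite /t; lia.
have sdec : forall i, s i = (t i * m.+1 + r i)%N by move=> i; exact: divn_eq.
have rle : forall i, (r i <= m - (i == j))%N.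
  move=> i; case: (eqVneq i j) => [->|_].
    by rewrite subn1 -ltnS prednK // (leq_ltn_trans (leq_mod _ _)).
  by rewrite subn0 -ltnS ltn_mod.
have tj : t j = 0%N by rewrite /t divn_small // ltnS ltnW.
have SS : mdeg s = ((\sum_i t i) * m.+1 + \sum_i r i)%N.
  by rewrite mdegE (eq_bigr _ (fun i _ => sdec i)) big_split /= big_distrl.
have SB : (\sum_i (m - (i == j)) + 1 = m * n)%N.
  have -> : (1 = \sum_i (i == j : nat))%N.
    by rewrite (bigD1 j) //= eqxx big1 // => i /negbTE ->.
  rewrite -big_split /= (eq_bigr (fun _ => m)) => [|i _]; last first.
    by case: (i == j) => /=; move: m1; lia.
  by rewrite sum_nat_const card_ord mulnC.
have SRB : (\sum_i r i <= \sum_i (m - (i == j)))%N by apply: leq_sum => i _.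
have TE : (\sum_i t i = k - 1)%N.
  apply/eqP; rewrite eqn_leq Tk /=; rewrite leqNgt; apply/negP => lt.
  have : ((\sum_i t i).+1 * m.+1 <= (k - 1) * m.+1)%N by rewrite leq_mul2r lt orbT.
  move: ds SS SB SRB; rewrite [(m.+1 * (k-1))%N]mulnC.
  lia.
have RE : (\sum_i r i = \sum_i (m - (i == j)))%N.
  move: ds SS SB SRB; rewrite TE [(m.+1 * (k-1))%N]mulnC; lia.
have rE : forall i, r i = (m - (i == j))%N.
  move=> i; apply/eqP; rewrite eqn_leq rle /=.
  have : (\sum_i (m - (i == j) - r i) == 0)%N by rewrite sumnB // RE subnn.
  rewrite sum_nat_eq0 => /forallP /(_ i) /implyP /(_ isT).
  by rewrite subn_eq0.
have sjE : s j = (m - 1)%N.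
  by rewrite sdec tj rE eqxx mul0n add0n.
have siE : forall i, i != j -> s i = (m.+1 * (t i).+1).-1.
  move=> i ne; rewrite sdec rE (negbTE ne) subn0 mulnS mulnC; move: m1; lia.
have tle : forall i, (t i <= k - 1)%N.
  by move=> i; rewrite -TE (bigD1 i) //= leq_addr.
have Hc : forall i, exists c : Tn m k -> R,
    (forall x, c x != 0 -> (x.2 <= t i)%N /\ (i = j -> x.1 != ord0)) /\
    (forall e, (e <= s i)%N -> ell m k c e = (e == s i)%:R).
  move=> i; case: (eqVneq i j) => [->|ne].
    have [c [Hs He]] := @ell_exists m k [pred x : 'I_m.+1 | x != ord0] 1 (ltnW k2).
    have cS : #|[pred x : 'I_m.+1 | x != ord0]| = m by rewrite cardC1 card_ord.
    exists c; split.
      move=> x /Hs /andP [x1 x2]; split; last by [].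
      by rewrite tj; move: x2; lia.
    move=> e he; rewrite He cS muln1 ?sjE ?subn1 //.
    by move: he m1; rewrite sjE; lia.
  have tk : ((t i).+1 <= k)%N by move: (tle i) k2; lia.
  have [c [Hs He]] := @ell_exists m k [pred x : 'I_m.+1 | true] (t i).+1 tk.
  have cS : #|[pred x : 'I_m.+1 | true]| = m.+1 by rewrite -[RHS](card_ord m.+1); apply: eq_card.
  exists c; split.
    move=> x /Hs /andP [_ x2]; split; first by move: x2; lia.
    by move=> ij; move: ne; rewrite ij eqxx.
  move=> e he; rewrite He cS; last by move: he; rewrite [s i]siE //; move: m1; lia.
  by rewrite [s i]siE.
have [c Hcc] := fin_all_exists Hc.
have Hsupp : forall i x, c i x != 0 -> (x.2 <= t i)%N /\ (i = j -> x.1 != ord0).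
  by move=> i; case: (Hcc i).
have Hell : forall i e, (e <= s i)%N -> ell m k (c i) e = (e == s i)%:R.
  by move=> i; case: (Hcc i).
have L1 : Lf n m k c P0 = P0@_s.
  rewrite Lf_lin.
  rewrite (eq_big_seq (fun u => P0@_u * (u == s)%:R)); last first.
    move=> u uin; rewrite Lf_X; congr (_ * _).
    have du : (mdeg u <= mdeg s)%N.
      by have := msize_mdeg_lt uin; move: Hsz; rewrite ds; lia.
    case: (eqVneq u s) => [->|ne].
      by rewrite big1 // => i _; rewrite Hell // eqxx.
    have [i ui] : exists i, (u i < s i)%N.
      apply/existsP; apply: contraR ne; rewrite negb_exists => /forallP Hle.
      have Hle' : forall i, (s i <= u i)%N by move=> i; rewrite leqNgt Hle.
      have : (\sum_i (u i - s i) == 0)%N.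
        by rewrite sumnB // -!mdegE subn_eq0.
      rewrite sum_nat_eq0 => /forallP H0; apply/eqP/mnmP => i.
      apply/eqP; rewrite eqn_leq Hle' andbT -subn_eq0.
      exact: (implyP (H0 i) isT).
    by rewrite (bigD1 i) //= Hell ?(ltnW ui) // (ltn_eqF ui) mul0r.
  rewrite (big_rem s sin) /= eqxx mulr1 big1_seq ?addr0 // => u /andP [_ uin].
  case: eqP => [E|_]; last by rewrite mulr0.
  by move: uin; rewrite E mem_rem_uniqF.
have L0 : Lf n m k c P0 = 0.
  rewrite /Lf big1 // => A _.
  case: (eqVneq (\prod_i c i (A i)) 0) => [->|nz]; first by rewrite mul0r.
  move/prodf_neq0: nz => Hnz.
  set be := [multinom ((A i).2 : nat) | i < n].
  have dbe : (mdeg be < k)%N.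
    have : (mdeg be <= \sum_i t i)%N.
      rewrite mdegE; apply: leq_sum => i _; rewrite mnmE.
      exact: (Hsupp i _ (Hnz i isT)).1.
    by rewrite TE; move: k2; lia.
  pose a := fun i => (A i).1.
  have aj : a j != ord0 := (Hsupp j _ (Hnz j isT)).2 erefl.
  have -> : P0 = Ppoly n m k - (Ppoly n m k - P0) by rewrite opprB addrC subrK.
  rewrite mderivmB mevalB.
  have [Q EQ] := Ppoly_fac n m k j (a j) aj.
  rewrite {1}EQ meval_powfac //.
  have := H a (ex_intro _ j aj) be dbe; rewrite /grid_pt => ->.
  by rewrite subrr mulr0.
move: sin; rewrite mcoeff_msupp -L1 L0 eqxx //.
Qed.

Theorem claim5p3 (m k n : nat) (P0 : {mpoly R[n]}) :
  (1 <= m)%N -> (2 <= k)%N -> (k - 1 <= n)%N ->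
  reduced m k P0 ->
  (forall a : 'I_n -> 'I_m.+1, (exists i, a i != ord0) ->
      mult_ge (Ppoly n m k - P0) k (grid_pt a)) ->
  mult_ge (Ppoly n m k - P0) k.-1 (fun _ => 0) ->
  exists Q : {mpoly R[n]},
    homog_comp (m * n + m.+1 * (k - 1) - 1) P0 = Q * (\prod_(i < n) 'X_i) ^+ m.
Proof.
move=> m1 k2 nk red H1 H0.
apply: final_div => s sin ds i.
rewrite leqNgt; apply/negP => si.
exact: (@key m k n P0 s i m1 k2 red H1 sin ds si).
Qed.
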